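(* Let $v_1,\ldots,v_k$ be unit vectors in $\mathbb{R}^n$ for some $k \in \mathbb{N}$, and let $S = \mathrm{span}\lbrace v_1,\ldots,v_k\rbrace$. Let $\mathcal{F}$ denote the set of all matrices $F$ whose columns are the vectors of a maximal linearly independent subset $\lbrace f_1,\ldots,f_r\rbrace \subset \lbrace v_1,\ldots,v_k\rbrace$. Let $Q = (I - v_kv_k')(I - v_{k-1}v_{k-1}')\cdots(I - v_1v_1')$. Then $$\sup_{y \in S,\ \|y\|_2 = 1} \|Qy\|_2 \leq \sqrt{1 - \min_{F\in\mathcal{F}} \det(F'F)}.$$
   Context: $'$ denotes transpose; $I$ is the $n\times n$ identity. *)

(* Defs.v *)
From HB Require Import structures.
From mathcomp Require Import all_boot all_order all_algebra.
From mathcomp Require Import reals.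
Set Implicit Arguments. Unset Strict Implicit. Unset Printing Implicit Defensive.
Import Order.TTheory GRing.Theory Num.Theory.
Local Open Scope ring_scope.

Section Defs.
Variables (R : realType) (n k : nat) (v : 'I_k -> 'cV[R]_n).

Definition norm2 (y : 'cV[R]_n) : R := Num.sqrt (\sum_(i < n) (y i 0) ^+ 2).

Definition in_span (y : 'cV[R]_n) : Prop :=
  exists c : 'I_k -> R, y = \sum_(j < k) c j *: v j.

Definition projQ : 'M[R]_n :=
  \big[mulmx/1%:M]_(j <- rev (enum 'I_k)) (1%:M - v j *m (v j)^T).

(* matrix F whose columns are the v_j, j in T (in increasing index order) *)
Definition colmx (T : {set 'I_k}) : 'M[R]_(n, #|T|) :=
  \matrix_(i < n, j < #|T|) v (enum_val j) i 0.

Definition lin_indep (T : {set 'I_k}) : bool := \rank (colmx T) == #|T|.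

(* min over maximal linearly independent subsets of det(F'F);
   the family is always nonempty, so the default 1 is never used *)
Definition min_gram_det : R :=
  \big[Num.min/1]_(T : {set 'I_k} | maxset lin_indep T) \det ((colmx T)^T *m colmx T).

End Defs.

(* Main.v *)
Require Import Defs.
From HB Require Import structures.
From mathcomp Require Import all_boot all_order all_algebra.
From mathcomp Require Import reals ring lra.
Import Order.TTheory GRing.Theory Num.Theory.
Local Open Scope ring_scope.

Set Implicit Arguments. Unset Strict Implicit. Unset Printing Implicit Defensive.

Section Dot.
Variables (R : realType) (n : nat).
Implicit Types x y z u : 'cV[R]_n.

Definition dot x y : R := (x^T *m y) 0 0.

Lemma dotE x y : dot x y = \sum_i x i 0 * y i 0.
Proof. by rewrite /dot mxE; apply: eq_bigr => i _; rewrite mxE. Qed.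

Lemma dotC x y : dot x y = dot y x.
Proof. by rewrite !dotE; apply: eq_bigr => i _; rewrite mulrC. Qed.

Lemma dotDr x y z : dot x (y + z) = dot x y + dot x z.
Proof. by rewrite /dot mulmxDr mxE. Qed.

Lemma dotDl x y z : dot (y + z) x = dot y x + dot z x.
Proof. by rewrite dotC dotDr !(dotC x). Qed.

Lemma dotZr a x y : dot x (a *: y) = a * dot x y.
Proof. by rewrite /dot -scalemxAr mxE. Qed.

Lemma dotZl a x y : dot (a *: x) y = a * dot x y.
Proof. by rewrite dotC dotZr dotC. Qed.

Lemma dotNr x y : dot x (- y) = - dot x y.
Proof. by rewrite -scaleN1r dotZr mulN1r. Qed.

Lemma dotNl x y : dot (- x) y = - dot x y.
Proof. by rewrite dotC dotNr dotC. Qed.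

Lemma dotBr x y z : dot x (y - z) = dot x y - dot x z.
Proof. by rewrite dotDr dotNr. Qed.

Lemma dotBl x y z : dot (y - z) x = dot y x - dot z x.
Proof. by rewrite dotDl dotNl. Qed.

Lemma dot0r x : dot x 0 = 0.
Proof. by rewrite /dot mulmx0 mxE. Qed.

Lemma dot0l x : dot 0 x = 0.
Proof. by rewrite dotC dot0r. Qed.

Lemma dotMl (A : 'M[R]_n) x y : dot (A *m x) y = dot x (A^T *m y).
Proof. by rewrite /dot trmx_mul mulmxA. Qed.

Lemma dot_ge0 x : 0 <= dot x x.
Proof. by rewrite dotE sumr_ge0 // => i _; rewrite -expr2 sqr_ge0. Qed.

Lemma dot_eq0 {x} : dot x x = 0 -> x = 0.
Proof.
rewrite dotE => h; apply/matrixP => i j; rewrite ord1 mxE.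
have := psumr_eq0P (P := predT) (fun i _ => sqr_ge0 (x i 0)).
rewrite (eq_bigr (fun i => x i 0 * x i 0)) ?h; last by move=> l _; rewrite expr2.
by move=> /(_ erefl i isT) /eqP; rewrite sqrf_eq0 => /eqP.
Qed.

Lemma dot_CS x y : dot x y ^+ 2 <= dot x x * dot y y.
Proof.
have [y0|ny] := eqVneq (dot y y) 0.
  by rewrite (dot_eq0 y0) dot0r dot0r expr0n mulr0.
have hy : 0 < dot y y by rewrite lt_def ny dot_ge0.
set a := dot x y / dot y y.
have := dot_ge0 (x - a *: y).
rewrite dotBl !dotBr !dotZl !dotZr (dotC y x).
have -> : a * (a * dot y y) = a * dot x y by rewrite /a mulfVK.
rewrite subrr subr0 /a => h.
have : 0 <= dot x x * dot y y - dot x y ^+ 2.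
  have := mulr_ge0 h (ltW hy).
  by rewrite mulrBl [_ / _ * _ * _]mulrAC divfK // expr2.
by rewrite subr_ge0.
Qed.

Lemma mul_trE x u : x *m (x^T *m u) = dot x u *: x.
Proof. by rewrite [x^T *m u]mx11_scalar mul_mx_scalar. Qed.

Lemma norm2_dot y : norm2 y = Num.sqrt (dot y y).
Proof. by rewrite /norm2 dotE; congr Num.sqrt; apply: eq_bigr => i _; rewrite expr2. Qed.

End Dot.

Lemma castmx_mulmx (R : realType) m p N q (e : p = N) (A : 'M[R]_(m, p)) (C : 'M[R]_(p, q)) :
  castmx (erefl m, e) A *m castmx (e, erefl q) C = A *m C.
Proof. by case: N / e; rewrite !castmx_id. Qed.

Lemma gram_det_ext (R : realType) n p N (F : 'M[R]_(n, p)) (c z : 'cV[R]_n)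
  (a : 'cV[R]_p) (G : 'M[R]_(n, N)) (e : (p + 1)%N = N) :
  c = F *m a + z -> F^T *m z = 0 -> G = castmx (erefl n, e) (row_mx F c) ->
  \det (G^T *m G) = \det (F^T *m F) * dot z z.
Proof.
case: N / e G => G -> Fz ->; rewrite castmx_id.
have -> : row_mx F (F *m a + z) = row_mx F z *m block_mx 1%:M a 0 1%:M.
  by rewrite mul_row_block !mulmx1 !mulmx0 addr0 ?mul0mx ?add0r addrC.
rewrite trmx_mul -mulmxA [X in _ *m X]mulmxA tr_row_mx mul_col_row Fz.
have -> : z^T *m F = 0 by rewrite -[F]trmxK -trmx_mul Fz trmx0.
rewrite !det_mulmx det_tr det_ublock det_ublock !det1 mul1r mulr1 det_mx11.
by rewrite mul1r.
Qed.

Lemma enum_setU1_max k (T : {set 'I_k}) (j : 'I_k) :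
  (forall t, t \in T -> (t < j)%N) -> enum (j |: T) = rcons (enum T) j.
Proof.
move=> hT.
have srt : forall A : {set 'I_k}, sorted (fun a b : 'I_k => (a < b)%N) (enum A).
  move=> A; rewrite /enum_mem -enumT; apply: sorted_filter.
    by move=> ? ? ?; apply: ltn_trans.
  by have := iota_ltn_sorted 0 k; rewrite -val_enum_ord sorted_map.
apply: (irr_sorted_eq (leT := fun a b : 'I_k => (a < b)%N)).
- by move=> ? ? ?; apply: ltn_trans.
- by move=> ?; rewrite /= ltnn.
- exact: srt.
- have := srt T; case: (enum T) (mem_enum T) => [|x s] //= hmem.
  rewrite rcons_path => -> /=; apply: hT; rewrite -hmem.
  exact: mem_last.
- by move=> i; rewrite mem_rcons in_cons !mem_enum in_setU1.
Qed.

Lemma colmx_setU1 (R : realType) n k (v : 'I_k -> 'cV[R]_n) (T : {set 'I_k}) (j : 'I_k)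
  (hT : forall t, t \in T -> (t < j)%N) (e : (#|T| + 1)%N = #|j |: T|) :
  colmx v (j |: T) = castmx (erefl n, e) (row_mx (colmx v T) (v j)).
Proof.
apply/matrixP => i l; rewrite castmxE /= !mxE (enum_val_nth j) enum_setU1_max //.
case: splitP => [l1 hl1 | l2 hl2]; rewrite ?mxE nth_rcons -cardE /=.
  have -> : (l : nat) = l1 by rewrite -hl1.
  by rewrite ltn_ord (enum_val_nth j) cast_ord_id.
have -> : (l : nat) = #|T| by move: hl2; rewrite ord1 addn0.
by rewrite ltnn eqxx ord1 cast_ord_id.
Qed.

Lemma mx_ext (R : realType) n (A B : 'M[R]_n) :
  (forall u : 'cV[R]_n, A *m u = B *m u) -> A = B.
Proof.
move=> h; apply/matrixP => i l.
have := congr1 (fun M : 'cV[R]_n => M i 0) (h (delta_mx l 0)).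
by rewrite -!colE !mxE.
Qed.

Section Main.
Variables (R : realType) (n k : nat) (v : 'I_k -> 'cV[R]_n).
Hypothesis hv : forall j, dot (v j) (v j) = 1.

Definition P j := 1%:M - v j *m (v j)^T.
Definition Qm m := \big[mulmx/1%:M]_(j <- rev (take m (enum 'I_k))) P j.
Definition gram (T : {set 'I_k}) := (colmx v T)^T *m colmx v T.

Lemma P_mul j u : P j *m u = u - dot (v j) u *: v j.
Proof. by rewrite /P mulmxBl mul1mx -mulmxA mul_trE. Qed.

Lemma P_norm j u : dot (P j *m u) (P j *m u) = dot u u - dot (v j) u ^+ 2.
Proof.
rewrite P_mul dotBl !dotBr !dotZl !dotZr hv (dotC u (v j)).
by rewrite mulr1 expr2 subrr subr0.
Qed.

Lemma Qm_step m (hm : (m < k)%N) : Qm m.+1 = P (Ordinal hm) *m Qm m.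
Proof.
rewrite /Qm (take_nth (Ordinal hm)) ?size_enum_ord // rev_rcons big_cons.
by congr (P _ *m _); apply: val_inj; rewrite /= nth_enum_ord.
Qed.

Lemma Qm0 : Qm 0 = 1%:M.
Proof. by rewrite /Qm take0 big_nil. Qed.

Lemma Qm_k : Qm k = projQ v.
Proof. by rewrite /Qm take_oversize ?size_enum_ord. Qed.

Lemma Qm_fix m w : (m <= k)%N -> (forall i : 'I_k, (i < m)%N -> dot (v i) w = 0) ->
  Qm m *m w = w.
Proof.
elim: m => [|m IH] hm h; first by rewrite Qm0 mul1mx.
rewrite Qm_step -mulmxA IH ?(ltnW hm) //; last by move=> i hi; apply: h; rewrite ltnS ltnW.
by rewrite P_mul h //= scale0r subr0.
Qed.

Lemma Qm_inv m (U : 'M[R]_n) (u : 'cV[R]_n) : (m <= k)%N ->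
  (forall i : 'I_k, (i < m)%N -> U *m v i = v i) -> U *m u = u ->
  U *m (Qm m *m u) = Qm m *m u.
Proof.
move=> + hU hu; elim: m hU => [|m IH] hU hm; first by rewrite Qm0 mul1mx.
rewrite Qm_step -mulmxA P_mul mulmxBr -scalemxAr hU // IH //; last first.
  exact: ltnW.
by move=> i hi; apply: hU; rewrite ltnS ltnW.
Qed.

Lemma U_colmx (U : 'M[R]_n) (S : {set 'I_k}) :
  (forall t, t \in S -> U *m v t = v t) -> U *m colmx v S = colmx v S.
Proof.
move=> h; apply/matrixP => i l.
rewrite !mxE -(h _ (enum_valP l)) mxE; apply: eq_bigr => r _; rewrite mxE //.
Qed.

Definition Inv m := exists T : {set 'I_k}, exists U : 'M[R]_n, exists B : 'M[R]_(#|T|, n),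
  (forall t, t \in T -> (t < m)%N) /\ U^T = U /\ U *m U = U /\
  (forall j : 'I_k, (j < m)%N -> U *m v j = v j) /\
  U = colmx v T *m B /\
  (0 < \det (gram T) /\ \det (gram T) <= 1) /\
  (forall y, U *m y = y -> dot (Qm m *m y) (Qm m *m y) <= (1 - \det (gram T)) * dot y y).

Lemma Inv0 : Inv 0.
Proof.
exists set0, 0, 0; split; first by move=> t; rewrite inE.
split; first by rewrite trmx0.
split; first by rewrite mulmx0.
split; first by [].
split; first by rewrite mulmx0.
have -> : \det (gram set0) = 1.
  by move: (gram set0); rewrite cards0 => A; exact: det_mx00.
split; first by rewrite ltr01 lexx.
move=> y; rewrite mul0mx => <-; rewrite mulmx0 dot0r subrr mul0r //.
Qed.


Lemma key_ineq (q Y s t b D : R) : 0 <= q -> 0 <= Y -> 0 < b -> b <= 1 -> 0 < D -> D <= 1 ->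
  q <= (1 - D) * Y -> s^+2 <= (1 - b) * q ->
  q + t*t*b - (s + t*b)^+2 <= (1 - D*b) * (Y + t*t*b).
Proof.
move=> q0 Y0 b0 b1 D0 D1 qY sq.
have sY : s^+2 <= (1 - b) * ((1 - D) * Y).
  apply: (le_trans sq); apply: ler_wpM2l => //; lra.
suff : 0 <= D*(1-b)*Y - D*b^+2*t^+2 + (s+t*b)^+2.
  move=> h; have : 0 <= (1-D)*Y - q by lra.
  move=> h2. have -> : (1 - D*b) * (Y + t*t*b) = q + t*t*b - (s + t*b)^+2 + ((1-D)*Y - q) + (D*(1-b)*Y - D*b^+2*t^+2 + (s+t*b)^+2) by ring.
  lra.
have [D1'|Dlt1] := eqVneq D 1.
  subst D. have s0 : s^+2 <= 0 by move: sY; rewrite subrr mul0r mulr0.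
  have : s = 0 by apply/eqP; rewrite -sqrf_eq0 eq_le s0 sqr_ge0.
  move=> ->. rewrite add0r mul1r; nra.
have Dl : 0 < 1 - D by rewrite subr_gt0 lt_neqAle Dlt1 D1.
have id : (1-D) * (D*(1-b)*Y - D*b^+2*t^+2 + (s+t*b)^+2) = (s + (1-D)*b*t)^+2 + D*((1-D)*(1-b)*Y - s^+2) by ring.
have : 0 <= (1-D) * (D*(1-b)*Y - D*b^+2*t^+2 + (s+t*b)^+2).
  rewrite id; apply: addr_ge0; first exact: sqr_ge0.
  apply: mulr_ge0; first lra. rewrite subr_ge0; move: sY; rewrite mulrA [(1-b)*(1-D)]mulrC //.
by rewrite pmulr_rge0.
Qed.

Lemma Inv_step m (hm : (m < k)%N) : Inv m -> Inv m.+1.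
Proof.
case=> T [U [B [hT [hUt [hUU [hUv [hUB [[hD0 hD1] hQ]]]]]]]].
set j := Ordinal hm; set x := v j.
set z := x - U *m x.
have Uz : U *m z = 0 by rewrite /z mulmxBr mulmxA hUU subrr.
have zdef : z = x - U *m x by [].
have xdec2 : x = U *m x + z by rewrite /z addrC subrK.
clearbody z.
have dotUz u : dot (U *m u) z = 0 by rewrite dotMl hUt Uz dot0r.
have dotzU u : dot z (U *m u) = 0 by rewrite dotC dotUz.
have hvz (i : 'I_k) : (i < m)%N -> dot (v i) z = 0 by move=> hi; rewrite -(hUv i hi) dotUz.
have hTm t : t \in T -> U *m v t = v t by move=> ht; apply: hUv; exact: hT.
have FU : U *m colmx v T = colmx v T := U_colmx hTm.
have Fz : (colmx v T)^T *m z = 0 by rewrite -FU trmx_mul hUt -mulmxA Uz mulmx0.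
have xdec : x = colmx v T *m (B *m x) + z by rewrite mulmxA -hUB -xdec2.
have b2def : dot z z = 1 - dot (U *m x) (U *m x).
  have := hv j; rewrite -/x {1 2}xdec2 dotDl !dotDr dotUz dotzU => <-.
  by rewrite addr0 add0r addrC addKr.
have b2le1 : dot z z <= 1 by have := dot_ge0 (U *m x); rewrite b2def; lra.
have hj : (j < m.+1)%N by [].
have vlt (i : 'I_k) : (i < m.+1)%N -> (i < m)%N \/ i = j.
  rewrite ltnS leq_eqVlt => /orP [/eqP e|]; last by left.
  by right; apply: val_inj.
case: (eqVneq (dot z z) 0) => [z0 | zn0].
  have Ux : U *m x = x by rewrite [RHS]xdec2 (dot_eq0 z0) addr0.
  exists T, U, B; split; first by move=> t /hT /ltnW.
  split; first by [].
  split; first by [].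
  split; first by move=> i /vlt [/hUv //|->].
  split; first by [].
  split; first by split.
  move=> y hy; rewrite (Qm_step hm) -mulmxA P_norm.
  have := hQ y hy; have := sqr_ge0 (dot (v (Ordinal hm)) (Qm m *m y)); lra.
set b2 := dot z z.
have hb : 0 < b2 by rewrite lt_def zn0 dot_ge0.
pose U' := U + b2^-1 *: (z *m z^T).
have U'u u : U' *m u = U *m u + (b2^-1 * dot z u) *: z.
  by rewrite mulmxDl -scalemxAl -mulmxA mul_trE scalerA.
have jT : j \notin T by apply/negP => /hT; rewrite ltnn.
have e : (#|T| + 1)%N = #|j |: T| by rewrite cardsU1 jT addnC.
have hTj t : t \in T -> (t < j)%N by exact: hT.
exists (j |: T), U',
  (castmx (e, erefl n) (col_mx (B - (b2^-1 *: (B *m x)) *m z^T) (b2^-1 *: z^T))).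
split; first by move=> t; rewrite in_setU1 => /orP [/eqP -> //| /hT /ltnW].
split.
  by rewrite /U' linearD linearZ /= trmx_mul trmxK hUt.
split.
  apply: mx_ext => u; rewrite -mulmxA !U'u mulmxDr -scalemxAr Uz scaler0 addr0.
  rewrite mulmxA hUU dotDr dotzU add0r dotZr -/b2.
  by rewrite [b2^-1 * dot z u]mulrC divfK // mulrC.
split.
  move=> i /vlt [hi|->]; rewrite U'u.
    by rewrite dotC hvz // mulr0 scale0r addr0 hUv.
  rewrite -/x {2}xdec2 dotDr dotzU add0r -/b2 mulVf // scale1r -xdec2 //.
split.
  rewrite (colmx_setU1 v hTj e) castmx_mulmx mul_row_col /U' hUB.
  rewrite mulmxBr -scalemxAl -!scalemxAr mulmxA -hUB.
  rewrite [colmx v T *m (B *m x)]mulmxA -hUB -addrA; congr (_ + _).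
  by rewrite addrC -scalerBr -mulmxBl -zdef.
have hdet : \det (gram (j |: T)) = \det (gram T) * b2.
  exact: (gram_det_ext xdec Fz (colmx_setU1 v hTj e)).
rewrite hdet; split.
  split; first exact: mulr_gt0.
  by apply: mulr_ile1 => //; apply: ltW.
move=> y hy.
set D := \det (gram T).
set t := b2^-1 * dot z y.
set y' := U *m y.
have ydec : y = y' + t *: z by rewrite -{1}hy U'u.
have Uy' : U *m y' = y' by rewrite /y' mulmxA hUU.
have Qz : Qm m *m z = z := Qm_fix (ltnW hm) hvz.
set p := Qm m *m y'.
have Up : U *m p = p := Qm_inv (ltnW hm) hUv Uy'.
have pz : dot p z = 0 by rewrite -Up dotUz.
have y'z : dot y' z = 0 by rewrite -Uy' dotUz.
have Qy : Qm m.+1 *m y = P j *m (p + t *: z).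
  rewrite (Qm_step hm) -mulmxA; congr (_ *m _); by rewrite {1}ydec mulmxDr -scalemxAr Qz.
have xp : dot x p = dot (U *m x) p by rewrite {1}xdec2 dotDl (dotC z p) pz addr0.
have xz : dot x z = b2 by rewrite {1}xdec2 dotDl dotUz add0r.
have yy : dot y y = dot y' y' + t * t * b2.
  rewrite {1 2}ydec dotDl !dotDr !dotZl !dotZr (dotC z y') y'z -/b2; ring.
have pp : dot (p + t *: z) (p + t *: z) = dot p p + t * t * b2.
  rewrite dotDl !dotDr !dotZl !dotZr (dotC z p) pz -/b2; ring.
have xpt : dot x (p + t *: z) = dot (U *m x) p + t * b2 by rewrite dotDr dotZr xp xz.
rewrite Qy P_norm -/x pp xpt yy.
have UxUx : dot (U *m x) (U *m x) = 1 - b2 by rewrite /b2 b2def; ring.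
apply: key_ineq => //.
- exact: dot_ge0.
- exact: dot_ge0.
- exact: hQ.
- by rewrite -UxUx; apply: dot_CS.
Qed.

End Main.
Unset Implicit Arguments.

Theorem mainTheorem9 (R : realType) (n k : nat) (v : 'I_k -> 'cV[R]_n) :
  (forall j, norm2 (v j) = 1) ->
  forall y : 'cV[R]_n, in_span v y -> norm2 y = 1 ->
  norm2 (projQ v *m y) <= Num.sqrt (1 - min_gram_det v).
Proof.
move=> hn y hy hy1.
have unit_dot (u : 'cV[R]_n) : norm2 u = 1 -> dot u u = 1.
  rewrite norm2_dot => h; have := sqr_sqrtr (dot_ge0 u).
  by rewrite h expr1n => <-.
have hv j : dot (v j) (v j) = 1 by apply: unit_dot.
have hI : forall m, (m <= k)%N -> Inv v m.
  elim => [|m IH] hm; first exact: Inv0.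
  exact: (Inv_step hv hm (IH (ltnW hm))).
case: (hI k (leqnn k)) => T [U [B [hT [hUt [hUU [hUv [hUB [[hD0 hD1] hQ]]]]]]]].
have Uy : U *m y = y.
  case: hy => c ->; rewrite mulmx_sumr; apply: eq_bigr => j _.
  by rewrite -scalemxAr hUv.
have key := hQ y Uy; rewrite Qm_k (unit_dot y hy1) mulr1 in key.
have liT : lin_indep v T.
  rewrite /lin_indep eqn_leq rank_leq_col /=.
  have hu : gram v T \in unitmx by rewrite unitmxE unitfE gt_eqF.
  rewrite -{1}(mxrank_unit hu) /gram; exact: mxrankM_maxr.
have maxT : maxset (lin_indep v) T.
  apply/maxsetP; split => // B' hB' sTB'.
  apply/eqP; rewrite eq_sym eqEcard sTB' /= -(eqP hB') -(eqP liT).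
  have -> : colmx v B' = colmx v T *m (B *m colmx v B').
    rewrite mulmxA -hUB U_colmx // => t _; apply: hUv; exact: ltn_ord.
  exact: mxrankM_maxl.
have minle : min_gram_det v <= \det (gram v T).
  exact: (bigmin_le_cond _ _ maxT).
rewrite norm2_dot; apply: ler_wsqrtr; lra.
Qed.
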